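(* Let $n,r$ be integers with $n\ge r+2\ge 2$. For each $i\in\{1,\dots,n-1\}$, the subgroup of $K$ generated by $x^{(i)}_1,\dots,x^{(i)}_r$ is a free group. The subgroup of $K$ generated by $x^{(1)}_1,x^{(2)}_2,\dots,x^{(r)}_r$ is a free group.
   Context: For $\alpha\in\{1,\dots,n\}$ let $F^{(\alpha)}$ be the free group on $a^{(\alpha)}_1,\dots,a^{(\alpha)}_r$, let $\psi\colon F^{(1)}\times\cdots\times F^{(n)}\to\mathbb Z^r$ send each $a^{(\alpha)}_j$ to the standard basis vector $e_j$, and $K=\ker\psi$. For $\alpha\in\{1,\dots,n-1\}$, $j\in\{1,\dots,r\}$, $x^{(\alpha)}_j=a^{(\alpha)}_j(a^{(n)}_j)^{-1}\in K$. *)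

(* Defs.v *)
From mathcomp Require Import all_boot ssralg ssrint.

(** Letters of the free group F on a_1..a_r: (j, false) = a_{j+1}, (j, true) = a_{j+1}^{-1}. *)
Definition letter (r : nat) := ('I_r * bool)%type.

Definition flip (r : nat) (l : letter r) : letter r := (l.1, ~~ l.2).

Definition cons_red (r : nat) (l : letter r) (s : seq (letter r)) : seq (letter r) :=
  match s with
  | y :: s' => if y == flip r l then s' else l :: s
  | [::] => [:: l]
  end.

Definition reduce (r : nat) (s : seq (letter r)) : seq (letter r) :=
  foldr (cons_red r) [::] s.

(** The group F^(1) x ... x F^(n): an element is a family (indexed by 'I_n,
    factor alpha = 1..n corresponding to the ordinal alpha-1) of reduced words. *)
Definition PG (n r : nat) := {ffun 'I_n -> seq (letter r)}.

Definition pmul (n r : nat) (g h : PG n r) : PG n r :=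
  [ffun b => reduce r (g b ++ h b)].
Definition pinv (n r : nat) (g : PG n r) : PG n r :=
  [ffun b => reduce r (rev (map (flip r) (g b)))].
Definition pone (n r : nat) : PG n r := [ffun => [::]].

(** a^(alpha)_(j+1), alpha in {1..n} (1-based), j : 'I_r (0-based) *)
Definition agen (n r : nat) (alpha : nat) (j : 'I_r) : PG n r :=
  [ffun b : 'I_n => if eqn (nat_of_ord b).+1 alpha then [:: (j, false)] else [::]].

Definition xgen (n r : nat) (alpha : nat) (j : 'I_r) : PG n r :=
  pmul n r (agen n r alpha j) (pinv n r (agen n r n j)).

(** psi : F^(1) x ... x F^(n) -> Z^r, and K = ker psi (for reference) *)
Definition psi (n r : nat) (g : PG n r) (j : 'I_r) : int :=
  \sum_(b < n) \sum_(l <- g b | l.1 == j) (if l.2 then (-1)%R else 1%R).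
Definition inK (n r : nat) (g : PG n r) : Prop := forall j, psi n r g j = 0%R.

Definition eval_word (n r : nat) (I : Type) (B : I -> PG n r) (w : seq (I * bool)) : PG n r :=
  foldr (fun ib acc => pmul n r (if ib.2 then pinv n r (B ib.1) else B ib.1) acc) (pone n r) w.

Fixpoint reducedP (I : Type) (w : seq (I * bool)) : Prop :=
  match w with
  | x :: ((y :: _) as t) => ~ (y.1 = x.1 /\ y.2 = ~~ x.2) /\ reducedP I t
  | _ => True
  end.

Definition gen_subgroup (n r : nat) (J : Type) (x : J -> PG n r) : PG n r -> Prop :=
  fun g => exists w : seq (J * bool), g = eval_word n r J x w.

Definition is_free_subgroup (n r : nat) (H : PG n r -> Prop) : Prop :=
  exists (I : Type) (B : I -> PG n r),
    (forall i, H (B i)) /\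
    (forall g, H g -> exists w : seq (I * bool), g = eval_word n r I B w) /\
    (forall w : seq (I * bool), reducedP I w -> w <> [::] -> eval_word n r I B w <> pone n r).

(* Main.v *)
Require Import Defs.
From mathcomp Require Import all_boot.

Section Aux.
Variable r : nat.

Fixpoint nored (s : seq (letter r)) : bool :=
  match s with
  | x :: ((y :: _) as t) => (y != flip r x) && nored t
  | _ => true
  end.

Lemma nored_cons l s : nored s -> nored (cons_red r l s).
Proof.
case: s => [|y s] //= H.
case: ifP => E //=; last by rewrite E.
by case: s H => [|z s] //= /andP[].
Qed.

Lemma nored_reduce s : nored (reduce r s).
Proof. by elim: s => [|x s IH] //=; apply: nored_cons. Qed.

Lemma reduce_id s : nored s -> reduce r s = s.
Proof.
elim: s => [|x s IH] //= H.
have Hs : nored s by case: s IH H => [|y s] //= _ /andP[].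
rewrite (IH Hs).
case: s IH H Hs => [|y s] //= _ /andP[H1 _] _.
by rewrite (negbTE H1).
Qed.

Lemma reduceK s : reduce r (reduce r s) = reduce r s.
Proof. exact/reduce_id/nored_reduce. Qed.
End Aux.

Definition gl (r : nat) (ib : 'I_r * bool) : letter r := (ib.1, ~~ ib.2).

Lemma free_of (n r : nat) (x : 'I_r -> PG n r) (c : 'I_n)
  (hx : forall j, x j c = [:: (j, true)])
  (hred : forall j b, nored r (x j b)) :
  is_free_subgroup n r (gen_subgroup n r 'I_r x).
Proof.
have Ec : forall w, eval_word n r 'I_r x w c = reduce r (map (gl r) w).
  elim=> [|[i b] w IH] /=; first by rewrite ffunE.
  rewrite /pmul ffunE IH.
  case: b => /=.
    by rewrite /pinv ffunE hx /= reduceK.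
  by rewrite hx /= reduceK.
exists 'I_r, x; split; [|split].
- move=> i; exists [:: (i, false)] => /=.
  apply/ffunP => b; rewrite /pmul ffunE /pone ffunE cats0.
  by rewrite reduce_id.
- by [].
- move=> w Hw Hne E.
  have := Ec w; rewrite E /pone ffunE reduce_id.
    by case: w Hw Hne {E}.
  elim: w Hw {Hne E} => [|a [|b t] IH] //= [H1 H2].
  move: (IH H2) => /= ->; rewrite andbT /gl /flip /=.
  apply/negP => /eqP [] E1 E2; apply: H1; split => //.
  by move: E2; case: (b.2); case: (a.2).
Qed.

Theorem lemma3p1 (n r : nat) (hnr : 2 <= r + 2 <= n) :
  (forall i : nat, 1 <= i <= n - 1 ->
     is_free_subgroup n r (gen_subgroup n r 'I_r (fun j : 'I_r => xgen n r i j))) /\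
  is_free_subgroup n r (gen_subgroup n r 'I_r (fun j : 'I_r => xgen n r j.+1 j)).
Proof.
have hn : n.-1 < n by move: hnr; case: n => [|m] /=; [rewrite addn2 | move=> _; exact: ltnSn].
have En : n.-1.+1 = n by move: hn; clear; case: n.
pose c := Ordinal hn.
have key : forall alpha, alpha != n ->
    is_free_subgroup n r (gen_subgroup n r 'I_r (fun j => xgen n r alpha j)).
  move=> alpha Ha; apply: (@free_of n r _ c).
    move=> j; rewrite /xgen /pmul ffunE /pinv ffunE /agen !ffunE /=.
    rewrite En.
    have -> : eqn n alpha = false by apply/negbTE; rewrite eqnE eq_sym.
    by rewrite (_ : eqn n n = true) //; apply/eqnP.
  by move=> j b; rewrite /xgen /pmul ffunE; apply: nored_reduce.
split.
  move=> i /andP[_ Hi]; apply: key.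
  by apply/eqP => E; move: Hi; rewrite E subn1 leqNgt hn.
have : forall j : 'I_r, j.+1 != n.
  move=> j; apply/eqP => E; have := ltn_ord j; move: hnr; rewrite -E.
  by move=> /andP[_ H1] H2; move: H1; rewrite addn2 ltnS leqNgt ltnS ltnW.
move=> Hj.
apply: (@free_of n r _ c).
  move=> j; rewrite /xgen /pmul ffunE /pinv ffunE /agen !ffunE /=.
  have -> : eqn n.-1 j = false.
    by apply/negbTE; rewrite eqnE; apply/eqP => E; apply: (negP (Hj j)); rewrite -E En.
  by rewrite En (_ : eqn n n = true) //; apply/eqnP.
by move=> j b; rewrite /xgen /pmul ffunE; apply: nored_reduce.
Qed.
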